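(* Let $G = (X \dot\cup Y, E)$ be a $k$-regular bipartite graph on $2n$ vertices, with $k = \omega\left( \frac{n}{\log^{1/3} n} \right)$ and $n$ sufficiently large. Set $\varepsilon = \frac{n}{k\log^{1/3}(n)} = o(1)$. There exist $m = 2^{\Theta(n/k)}$ and cuts $(S_1,T_1),\ldots,(S_m,T_m)$ with the following properties. (1) For every $i\in[m]$ and $x\in V(G)$, $\deg^{\mathrm{Cr}}_{G,S_i,T_i}(x) \le (1+\varepsilon)\frac{k}{2}$. (2) Every internal cut $(S,T)$ with $|S|>|T|$ is $\varepsilon k$-close to $(S_i,T_i)$ for some $i\in[m]$.
   Context: A cut in $G$ is a pair $(S,T)$ with $S\subseteq X$, $T\subseteq Y$; write $S^c = X\setminus S$, $T^c = Y\setminus T$. The cross edges of $G$ with respect to $(S,T)$ are the edges between $S\cup T$ and $S^c\cup T^c$ (i.e., edges joining $S$ to $T^c$ or $S^c$ to $T$); the remaining edges are parallel. $\deg^{\mathrm{Cr}}_{G,S,T}(x)$ is the number of cross edges incident to $x$. The distance between cuts is $d((S_1,T_1),(S_2,T_2)) = |S_1\setminus S_2|+|S_2\setminus S_1|+|T_1\setminus T_2|+|T_2\setminus T_1|$, and two cuts are $C$-close if their distance is at most $C$. A cut is internal if it has at most $4nk/\log n$ cross edges. $[m]=\{1,\dots,m\}$; $\log$ is the natural logarithm. *)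

(* Defs.v *)
From mathcomp Require Import all_boot.
From Stdlib Require Import Reals.
Set Implicit Arguments. Unset Strict Implicit. Unset Printing Implicit Defensive.

(* A bipartite graph G = (X ∪ Y, E) with X = Y = 'I_n (two disjoint copies),
   given by its bipartite adjacency relation adj : X -> Y -> bool. *)
Definition bip_regular (n k : nat) (adj : 'I_n -> 'I_n -> bool) : Prop :=
  (forall x : 'I_n, #|[set y | adj x y]| = k) /\
  (forall y : 'I_n, #|[set x | adj x y]| = k).

(* edge xy (x in X, y in Y) is a cross edge of the cut (S,T), S ⊆ X, T ⊆ Y,
   iff exactly one of x ∈ S, y ∈ T holds (S to T^c, or S^c to T). *)
Definition is_cross (n : nat) (adj : 'I_n -> 'I_n -> bool) (S T : {set 'I_n})
  (x y : 'I_n) : bool := adj x y && ((x \in S) != (y \in T)).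

Definition degCr_X n adj (S T : {set 'I_n}) (x : 'I_n) : nat :=
  #|[set y | is_cross adj S T x y]|.
Definition degCr_Y n adj (S T : {set 'I_n}) (y : 'I_n) : nat :=
  #|[set x | is_cross adj S T x y]|.

Definition num_cross n adj (S T : {set 'I_n}) : nat :=
  #|[set p : 'I_n * 'I_n | is_cross adj S T p.1 p.2]|.

Definition cut_dist n (S1 T1 S2 T2 : {set 'I_n}) : nat :=
  #|S1 :\: S2| + #|S2 :\: S1| + #|T1 :\: T2| + #|T2 :\: T1|.

Definition internal_cut (n k : nat) adj (S T : {set 'I_n}) : Prop :=
  (INR (num_cross adj S T) <= 4 * INR n * INR k / ln (INR n))%R.

Definition log13 (n : nat) : R := Rpower (ln (INR n)) (1/3).

(* Main.v *)
Require Import Defs.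
From mathcomp Require Import all_boot zify.
From Stdlib Require Import Classical Reals Lra Psatz ClassicalEpsilon.
Set Implicit Arguments. Unset Strict Implicit. Unset Printing Implicit Defensive.

Section Core.
Variable V : finType.
Variable e : rel V.
Hypothesis esym : forall x y, e x y = e y x.
Hypothesis eirr : forall x, e x x = false.
Variable k : nat.
Hypothesis ereg : forall v, #|[set u | e v u]| = k.

Definition cr (U : {set V}) v := #|[set u | e v u && ((u \in U) != (v \in U))]|.
Definition Cr U := \sum_v cr U v.
Definition flip (U : {set V}) w := [set u | (u \in U) != (u == w)].

Lemma in_flip U w u : (u \in flip U w) = ((u \in U) != (u == w)).
Proof. by rewrite inE. Qed.

Lemma cr_flip_other (U : {set V}) w v : v != w ->
  cr (flip U w) v + (e v w && ((w \in U) != (v \in U))) =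
  cr U v + (e v w && ((w \in U) == (v \in U))).
Proof.
move=> vw; rewrite /cr (cardsD1 w [set u | _ && _]) [in RHS](cardsD1 w [set u | _ && _]).
have -> : [set u | e v u && ((u \in flip U w) != (v \in flip U w))] :\ w =
          [set u | e v u && ((u \in U) != (v \in U))] :\ w.
  apply/setP => u; rewrite !inE (negbTE vw).
  by case: (u =P w) => //= _; case: (e v u); case: (u \in U); case: (v \in U).
rewrite !inE eqxx (negbTE vw) /=.
case: (e v w); case: (w \in U); case: (v \in U) => /=; lia.
Qed.

Lemma cr_flip_self (U : {set V}) w : cr (flip U w) w + cr U w = k.
Proof.
rewrite /cr -(ereg w) -(cardsID [set u | (u \in U) != (w \in U)] [set u | e w u]).
have -> : [set u | e w u && ((u \in flip U w) != (w \in flip U w))] =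
          [set u | e w u] :\: [set u | (u \in U) != (w \in U)].
  apply/setP => u; rewrite !inE eqxx.
  case: (u =P w) => [->|_]; first by rewrite eirr andbF.
  by case: (e w u); case: (u \in U); case: (w \in U).
have -> : [set u | e w u && ((u \in U) != (w \in U))] =
          [set u | e w u] :&: [set u | (u \in U) != (w \in U)].
  by apply/setP => u; rewrite !inE.
by rewrite addnC.
Qed.

Lemma sum_ind_cr (U : {set V}) w : \sum_v (e v w && ((w \in U) != (v \in U))) = cr U w.
Proof.
rewrite /cr -sum1dep_card [in RHS]big_mkcond /=; apply: eq_bigr => v _.
by rewrite esym eq_sym; case: (_ && _).
Qed.

Lemma sum_ind_ncr (U : {set V}) w : \sum_v (e v w && ((w \in U) == (v \in U))) + cr U w = k.
Proof.
rewrite -(ereg w) -sum_ind_cr -big_split /= -sum1dep_card [in RHS]big_mkcond /=.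
apply: eq_bigr => v _; rewrite esym; case: (e w v) => //=.
by case: (w \in U); case: (v \in U).
Qed.

Lemma Cr_flip (U : {set V}) w : Cr (flip U w) + 4 * cr U w = Cr U + 2 * k.
Proof.
rewrite /Cr (bigD1 w) //= [in RHS](bigD1 w) //=.
have H1 : \sum_(v | v != w) cr (flip U w) v + \sum_(v | v != w) (e v w && ((w \in U) != (v \in U)))
   = \sum_(v | v != w) cr U v + \sum_(v | v != w) (e v w && ((w \in U) == (v \in U))).
  rewrite -!big_split /=; apply: eq_bigr => v vw; exact: cr_flip_other.
have H2 := sum_ind_cr U w; have H3 := sum_ind_ncr U w.
rewrite (bigD1 w) //= eirr /= in H2.
rewrite (bigD1 w) //= eirr /= in H3.
have H4 := cr_flip_self U w.
lia.
Qed.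


Lemma leq_cardU (A B : {set V}) : #|A :|: B| <= #|A| + #|B|.
Proof. by rewrite cardsU leq_subr. Qed.

Definition sdist (U W : {set V}) := #|U :\: W| + #|W :\: U|.

Lemma sdist_sym U W : sdist U W = sdist W U.
Proof. by rewrite /sdist addnC. Qed.

Lemma card_diff_tri (A B C : {set V}) : #|A :\: C| <= #|A :\: B| + #|B :\: C|.
Proof.
apply: leq_trans (leq_cardU _ _); apply: subset_leq_card; apply/subsetP => x.
rewrite !inE; case: (x \in A); case: (x \in B); case: (x \in C) => //.
Qed.

Lemma sdist_tri U W X : sdist U X <= sdist U W + sdist W X.
Proof.
rewrite /sdist; have := card_diff_tri U W X; have := card_diff_tri X W U; lia.
Qed.

Lemma sdist_flip U w : sdist U (flip U w) = 1.
Proof.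
rewrite /sdist.
case Hw: (w \in U).
- have -> : U :\: flip U w = [set w].
    apply/setP => u; rewrite !inE; case: (u =P w) => [->|]; rewrite ?Hw //.
    by case: (u \in U).
  have -> : flip U w :\: U = set0.
    apply/setP => u; rewrite !inE; case: (u =P w) => [->|]; rewrite ?Hw //.
    by case: (u \in U).
  by rewrite cards1 cards0.
- have -> : U :\: flip U w = set0.
    apply/setP => u; rewrite !inE; case: (u =P w) => [->|]; rewrite ?Hw //.
    by case: (u \in U).
  have -> : flip U w :\: U = [set w].
    apply/setP => u; rewrite !inE; case: (u =P w) => [->|]; rewrite ?Hw //.
    by case: (u \in U).
  by rewrite cards1 cards0.
Qed.

Definition eqv (Q : seq {set V}) u v := all (fun U : {set V} => (u \in U) == (v \in U)) Q.

Lemma eqv_refl Q u : eqv Q u u.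
Proof. by apply/allP => U _. Qed.

Lemma eqv_sym Q u v : eqv Q u v = eqv Q v u.
Proof. by apply: eq_all => U; rewrite eq_sym. Qed.

Lemma eqv_trans Q u v w : eqv Q u v -> eqv Q v w -> eqv Q u w.
Proof.
move=> /allP H1 /allP H2; apply/allP => U UQ.
by rewrite (eqP (H1 _ UQ)) (H2 _ UQ).
Qed.

Definition cls Q v := [set u | eqv Q u v].

Lemma cls_eq Q u v : eqv Q u v -> cls Q u = cls Q v.
Proof.
move=> H; apply/setP => x; rewrite !inE; apply/idP/idP => Hx.
- exact: eqv_trans Hx H.
- by apply: eqv_trans Hx _; rewrite eqv_sym.
Qed.

Definition tiny Q v := 2 * #|cls Q v| <= k.

Lemma tiny_eq Q u v : eqv Q u v -> tiny Q u = tiny Q v.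
Proof. by move=> H; rewrite /tiny (cls_eq H). Qed.

Definition tinys Q := [set v | tiny Q v].

Lemma cls_cons U Q v :
  cls (U :: Q) v = if v \in U then cls Q v :&: U else cls Q v :\: U.
Proof.
apply/setP => u; rewrite /cls /eqv /=.
case: (v \in U); rewrite !inE /=.
- by rewrite eqb_id andbC.
- by rewrite eqbF_neg andbC.
Qed.

Lemma sep_nbr Q v : #|[set u | e v u && ~~ eqv Q u v]| <= \sum_(U <- Q) cr U v.
Proof.
elim: Q => [|U Q IH].
  rewrite big_nil leqn0 cards_eq0; apply/eqP/setP => u; by rewrite !inE andbF.
rewrite big_cons; apply: leq_trans (leq_add (leqnn (cr U v)) IH).
apply: leq_trans (leq_cardU _ _); apply: subset_leq_card; apply/subsetP => u.
rewrite !inE /eqv /= negb_and; case/andP=> -> /=.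
by case/orP => ->; rewrite ?orbT.
Qed.

Lemma tiny_nbr Q v : tiny Q v -> k <= 2 * #|[set u | e v u && ~~ eqv Q u v]|.
Proof.
move=> tv; have := cardsID [set u | eqv Q u v] [set u | e v u]; rewrite ereg.
have -> : [set u | e v u] :\: [set u | eqv Q u v] = [set u | e v u && ~~ eqv Q u v].
  by apply/setP => u; rewrite !inE andbC.
have : #|[set u | e v u] :&: [set u | eqv Q u v]| <= #|cls Q v|.
  by apply: subset_leq_card; apply/subsetP => u; rewrite !inE => /andP[].
move: tv; rewrite /tiny; lia.
Qed.

Lemma tiny_count Q : #|tinys Q| * k <= 2 * \sum_(U <- Q) Cr U.
Proof.
rewrite -sum_nat_const.
apply: (@leq_trans (\sum_(v in tinys Q) 2 * \sum_(U <- Q) cr U v)).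
  apply: leq_sum => v; rewrite inE => tv.
  apply: leq_trans (tiny_nbr tv) _; rewrite leq_mul2l; apply/orP; right.
  exact: sep_nbr.
apply: (@leq_trans (\sum_v 2 * \sum_(U <- Q) cr U v)).
  rewrite [X in _ <= X](bigID (fun v => v \in tinys Q)) /=; exact: leq_addr.
rewrite -big_distrr /= leq_mul2l; apply/orP; right.
by rewrite exchange_big.
Qed.

Lemma sum_Cr_bound (Q : seq {set V}) Bn :
  (forall U, U \in Q -> Cr U <= Bn) -> \sum_(U <- Q) Cr U <= size Q * Bn.
Proof.
elim: Q => [|U Q IH] H; first by rewrite big_nil.
rewrite big_cons /= mulSn; apply: leq_add.
  by apply: H; rewrite inE eqxx.
by apply: IH => W WQ; apply: H; rewrite inE WQ orbT.
Qed.

Definition sep Q (P : {set V}) :=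
  (forall p, p \in P -> ~~ tiny Q p) /\
  (forall p p', p \in P -> p' \in P -> eqv Q p p' -> p = p').

Lemma card_cls Q p : #|cls Q p| = \sum_u (eqv Q u p : nat).
Proof.
by rewrite /cls -sum1dep_card [in LHS]big_mkcond /=; apply: eq_bigr => u _; case: (eqv Q u p).
Qed.

Lemma sep_bound Q P : sep Q P -> #|P| * k <= 2 * #|V|.
Proof.
case=> Hnt Hinj.
have H1 : \sum_(p in P) #|cls Q p| <= #|V|.
  under eq_bigr => p _ do rewrite card_cls.
  rewrite exchange_big /= -sum1_card; apply: leq_sum => u _.
  have -> : \sum_(p in P) (eqv Q u p : nat) = #|[set p in P | eqv Q u p]|.
    rewrite -sum1dep_card [in RHS]big_mkcond /= [in LHS]big_mkcond /=.
    by apply: eq_bigr => p _; case: (p \in P); case: (eqv Q u p).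
  apply/card_le1_eqP => p p'; rewrite !inE => /andP[pP up] /andP[p'P up'].
  apply: Hinj => //; [apply: (@eqv_trans Q _ u) => //; by rewrite eqv_sym].
rewrite -sum_nat_const.
apply: (@leq_trans (\sum_(p in P) 2 * #|cls Q p|)).
  apply: leq_sum => p pP; have := Hnt p pP; rewrite /tiny -ltnNge; exact: ltnW.
by rewrite -big_distrr /= leq_mul2l H1 orbT.
Qed.


Lemma tiny_small Q Bn : (forall W, W \in Q -> Cr W <= Bn) ->
  4 * size Q * Bn < k * k -> 2 * #|tinys Q| < k.
Proof.
move=> HB Hb; have H1 := tiny_count Q; have H2 := sum_Cr_bound HB.
have kp : 0 < k by case: k Hb => //; rewrite muln0.
rewrite -(ltn_pmul2r kp) -mulnA; rewrite -mulnA in Hb.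
move: (size Q * Bn) (#|tinys Q| * k) (k * k) H1 H2 Hb => a b c; set s := \sum_(U <- Q) Cr U => *. lia.
Qed.


Lemma eqv_cons U Q u v : eqv (U :: Q) u v = ((u \in U) == (v \in U)) && eqv Q u v.
Proof. by []. Qed.

Lemma grow Q P U v0 Bn : (forall W, W \in U :: Q -> Cr W <= Bn) ->
  4 * (size Q).+1 * Bn < k * k ->
  sep Q P -> ~~ tiny Q v0 -> k < 2 * #|cls Q v0 :&: U| -> k < 2 * #|cls Q v0 :\: U| ->
  (exists P', sep Q P' /\ #|P'| = #|P|.+1) \/
  (exists P', sep (U :: Q) P' /\ #|P'| = #|P|.+1).
Proof.
move=> HB Hb [Pnt Pinj] v0nt HU1 HU2.
have Ht : 2 * #|tinys (U :: Q)| < k by apply: (tiny_small HB).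
case: (pickP (fun p => (p \in P) && eqv Q p v0)) => [p0 /andP[p0P p0v]|none]; last first.
  left; exists (v0 |: P); split.
    split.
      by move=> p; rewrite !inE => /orP[/eqP->|/Pnt].
    move=> p p'; rewrite !inE => /orP[/eqP->|pP] /orP[/eqP->|p'P] //.
    - by move=> H; have := none p'; rewrite p'P eqv_sym H.
    - by move=> H; have := none p; rewrite pP H.
    - exact: Pinj.
  rewrite cardsU1; suff -> : v0 \notin P by [].
  by apply/negP => vP; have := none v0; rewrite vP eqv_refl.
right.
have Hf : forall p, p \in P -> exists2 u, u \in cls Q p & ~~ tiny (U :: Q) u.
  move=> p pP; case: (boolP [exists u in cls Q p, ~~ tiny (U :: Q) u]) => [/exists_inP[u u1 u2]|/exists_inPn H]; first by exists u.
  exfalso.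
  have : cls Q p \subset tinys (U :: Q).
    by apply/subsetP => u uc; rewrite inE; have := H u uc; rewrite negbK.
  move/subset_leq_card; have := Pnt p pP; rewrite /tiny; lia.
pose f p := odflt p [pick u in cls Q p | ~~ tiny (U :: Q) u].
have Hf' : forall p, p \in P -> eqv Q (f p) p /\ ~~ tiny (U :: Q) (f p).
  move=> p pP; rewrite /f; case: pickP => [u /andP[]|H]; first by rewrite inE.
  by have [u uc unt] := Hf p pP; have := H u; rewrite uc unt.
have [a aI] : exists a, a \in cls Q v0 :&: U.
  by apply/set0Pn; rewrite -card_gt0; move: HU1; case: #|_| => //; rewrite muln0.
have [b bD] : exists b, b \in cls Q v0 :\: U.
  by apply/set0Pn; rewrite -card_gt0; move: HU2; case: #|_| => //; rewrite muln0.
move: aI bD; rewrite !inE => /andP[av aU] /andP[bU bv].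
have ant : ~~ tiny (U :: Q) a.
  rewrite /tiny cls_cons aU (cls_eq av) -ltnNge; exact: HU1.
have bnt : ~~ tiny (U :: Q) b.
  rewrite /tiny cls_cons (negbTE bU) (cls_eq bv) -ltnNge; exact: HU2.
have fnot : forall x p, eqv Q x v0 -> p \in P :\ p0 -> f p != x.
  move=> x p xv; rewrite !inE => /andP[pp0 pP]; apply/eqP => fx.
  have [fe _] := Hf' p pP; rewrite fx in fe.
  have : eqv Q p p0.
    apply: (@eqv_trans Q _ x); first by rewrite eqv_sym.
    apply: (@eqv_trans Q _ v0) => //; by rewrite eqv_sym.
  by move/(Pinj _ _ pP p0P)/eqP; rewrite (negbTE pp0).
have finj : {in P :\ p0 &, injective f}.
  move=> p p'; rewrite !inE => /andP[_ pP] /andP[_ p'P] fpp.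
  have [fe _] := Hf' p pP; have [fe' _] := Hf' p' p'P.
  apply: Pinj => //; rewrite fpp in fe.
  apply: (@eqv_trans Q _ (f p')) => //; by rewrite eqv_sym.
have ab : a != b by apply/eqP => ab; move: aU; rewrite ab (negbTE bU).
exists (a |: (b |: f @: (P :\ p0))); split.
  split.
    move=> x; rewrite !inE => /orP[/eqP->//|/orP[/eqP->//|/imsetP[p pP ->]]].
    by move: pP; rewrite !inE => /andP[_ pP]; case: (Hf' p pP).
  have key : forall x, x \in a |: (b |: f @: (P :\ p0)) ->
     [\/ x = a, x = b | exists2 p, p \in P :\ p0 & x = f p].
    move=> x; rewrite !inE => /orP[/eqP->|/orP[/eqP->|/imsetP[p pP ->]]].
    - by constructor 1.
    - by constructor 2.
    - by constructor 3; exists p.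
  have C1 : forall q, q \in P :\ p0 -> ~~ eqv Q (f q) v0.
    by move=> q qP; apply/negP => H; have := fnot _ _ H qP; rewrite eqxx.
  move=> x y /key Hx /key Hy.
  case: Hx => [->|->|[p pP ->]]; case: Hy => [->|->|[q qP ->]] //;
    rewrite eqv_cons => /andP[xyU xy].
  - by move: xyU; rewrite aU (negbTE bU).
  - move: xy => xy; have := C1 q qP; rewrite eqv_sym in xy.
    by rewrite (eqv_trans xy av).
  - by move: xyU; rewrite aU (negbTE bU).
  - have := C1 q qP; rewrite eqv_sym in xy.
    by rewrite (eqv_trans xy bv).
  - have := C1 p pP; by rewrite (eqv_trans xy av).
  - have := C1 p pP; by rewrite (eqv_trans xy bv).
  - move: (pP) (qP); rewrite !inE => /andP[_ pP'] /andP[_ qP'].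
    have [fe _] := Hf' p pP'; have [fe' _] := Hf' q qP'.
    suff -> : p = q by [].
    apply: Pinj => //; apply: (@eqv_trans Q _ (f p)); first by rewrite eqv_sym.
    by apply: (@eqv_trans Q _ (f q)).
rewrite cardsU1 cardsU1 card_in_imset // (cardsD1 p0 P) p0P /=.
have -> : b \notin f @: (P :\ p0).
  by apply/imsetP => [[p pP bfp]]; have := fnot b p bv pP; rewrite bfp eqxx.
have -> : a \notin b |: f @: (P :\ p0).
  rewrite !inE negb_or ab /=.
  by apply/imsetP => [[p pP afp]]; have := fnot a p av pP; rewrite afp eqxx.
by [].
Qed.


Definition saturated (good : {set V} -> Prop) Q :=
  forall U, good U -> forall v, ~~ tiny Q v ->
    ~ (k < 2 * #|cls Q v :&: U| /\ k < 2 * #|cls Q v :\: U|).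

Lemma saturate (good : {set V} -> Prop) Bn J (v00 : V) :
  (forall U, good U -> Cr U <= Bn) -> 4 * J * Bn < k * k -> k < 2 * #|V| ->
  forall j, j <= J ->
  (exists Q P, (forall U, U \in Q -> good U) /\ size Q <= j /\ sep Q P /\ j < #|P|) \/
  (exists Q, (forall U, U \in Q -> good U) /\ size Q <= j /\ saturated good Q).
Proof.
move=> HB HJ HV; elim=> [_|j IH Hj].
  left; exists [::], [set v00]; split=> //; split=> //; split; last by rewrite cards1.
  split.
    move=> p _; rewrite /tiny -ltnNge.
    have -> : cls [::] p = [set: V] by apply/setP => u; rewrite !inE.
    by rewrite cardsT.
  by move=> p p'; rewrite !inE => /eqP-> /eqP->.
have [[Q [P [HQ [sQ [sP cP]]]]]|[Q [HQ [sQ sat]]]] := IH (ltnW Hj); last first.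
  by right; exists Q; split=> //; split=> //; apply: leq_trans sQ _.
case: (classic (saturated good Q)) => [sat|nsat].
  by right; exists Q; split=> //; split=> //; apply: leq_trans sQ _.
have [U HU] : exists U, ~ (good U -> forall v, ~~ tiny Q v ->
    ~ (k < 2 * #|cls Q v :&: U| /\ k < 2 * #|cls Q v :\: U|)).
  by apply: not_all_ex_not.
have [gU HU'] := imply_to_and _ _ HU.
have [v0 Hv0] := not_all_ex_not _ _ HU'.
have [v0nt Hv0'] := imply_to_and _ _ Hv0.
have [H1 H2] := NNPP _ Hv0'.
have HBQ : forall W, W \in U :: Q -> Cr W <= Bn.
  by move=> W; rewrite inE => /orP[/eqP->|/HQ]; apply: HB.
have Hb : 4 * (size Q).+1 * Bn < k * k.
  apply: leq_ltn_trans HJ; rewrite leq_mul2r leq_mul2l; apply/orP; right; apply/orP; right.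
  exact: leq_ltn_trans sQ Hj.
have [[P' [sP' cP']]|[P' [sP' cP']]] := grow HBQ Hb sP v0nt H1 H2.
- left; exists Q, P'; split=> //; split; first exact: leq_trans sQ _.
  by split=> //; rewrite cP'.
- left; exists (U :: Q), P'; split.
    by move=> W; rewrite inE => /orP[/eqP->|/HQ].
  by split=> //; split=> //; rewrite cP'.
Qed.

Definition Round Q U := [set v | ~~ tiny Q v && (#|cls Q v :\: U| < #|cls Q v :&: U|)].

Lemma round_close good Q U : saturated good Q -> good U ->
  sdist U (Round Q U) <= 2 * (#|tinys Q| + #|tinys (U :: Q)|).
Proof.
move=> sat gU.
have H : forall x, (x \in U :\: Round Q U) || (x \in Round Q U :\: U) ->
    x \in tinys Q :|: tinys (U :: Q).
  move=> x; rewrite !inE.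
  case tx: (tiny Q x) => //=; rewrite ?orbT //.
  have := sat U gU x; rewrite tx => /(_ isT) Hs.
  rewrite /tiny cls_cons.
  case xU: (x \in U) => /=; rewrite ?andbF ?orbF => Hc.
  - rewrite -ltnNge in Hc; case: (leqP (2 * #|cls Q x :&: U|) k) => // Hk.
    exfalso; apply: Hs; split=> //; lia.
  - case: (leqP (2 * #|cls Q x :\: U|) k) => // Hk.
    exfalso; apply: Hs; split=> //; lia.
have H1 : #|U :\: Round Q U| <= #|tinys Q| + #|tinys (U :: Q)|.
  apply: leq_trans (leq_cardU _ _); apply: subset_leq_card; apply/subsetP => x xU.
  by apply: H; rewrite xU.
have H2 : #|Round Q U :\: U| <= #|tinys Q| + #|tinys (U :: Q)|.
  apply: leq_trans (leq_cardU _ _); apply: subset_leq_card; apply/subsetP => x xU.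
  by apply: H; rewrite xU orbT.
rewrite /sdist; lia.
Qed.

Definition canon Q v := odflt v [pick u | eqv Q u v].

Lemma canon_eqv Q v : eqv Q (canon Q v) v.
Proof. by rewrite /canon; case: pickP => [u ->|_] //=; rewrite eqv_refl. Qed.

Lemma canon_eq Q u v : eqv Q u v -> canon Q u = canon Q v.
Proof.
move=> H; rewrite /canon.
have -> : [pick x | eqv Q x u] = [pick x | eqv Q x v].
  apply: eq_pick => x /=; apply/idP/idP => Hx.
  - exact: eqv_trans Hx H.
  - by apply: eqv_trans Hx _; rewrite eqv_sym.
by case: pickP => // Hn; have := Hn v; rewrite eqv_refl.
Qed.

Definition Pc Q := [set p | ~~ tiny Q p && (canon Q p == p)].

Lemma Pc_sep Q : sep Q (Pc Q).
Proof.
split; first by move=> p; rewrite inE => /andP[].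
move=> p p'; rewrite !inE => /andP[_ /eqP cp] /andP[_ /eqP cp'] H.
by rewrite -cp -cp'; apply: canon_eq.
Qed.

Lemma round_inv Q U u v : eqv Q u v -> (u \in Round Q U) = (v \in Round Q U).
Proof. by move=> H; rewrite !inE (tiny_eq H) (cls_eq H). Qed.

Lemma round_key Q U U' : Round Q U :&: Pc Q = Round Q U' :&: Pc Q ->
  Round Q U = Round Q U'.
Proof.
move=> HK; apply/setP => v.
have ce := canon_eqv Q v.
rewrite -(round_inv U ce) -(round_inv U' ce).
case tv: (tiny Q v).
  by rewrite !inE (tiny_eq ce) tv.
have cP : canon Q v \in Pc Q.
  by rewrite inE (tiny_eq ce) tv /= (canon_eq ce).
move/setP: HK => /(_ (canon Q v)); by rewrite !in_setI cP !andbT.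
Qed.


Lemma cr_set0 v : cr set0 v = 0.
Proof. by apply/eqP; rewrite cards_eq0; apply/eqP/setP => u; rewrite !inE andbF. Qed.

Lemma INR_addn (m n : nat) : INR (addn m n) = (INR m + INR n)%R.
Proof. by rewrite -plusE plus_INR. Qed.
Lemma INR_muln (m n : nat) : INR (muln m n) = (INR m * INR n)%R.
Proof. by rewrite -multE mult_INR. Qed.

Definition stableR (d : R) (W : {set V}) := forall v, (INR (2 * cr W v) <= INR k + d)%R.

Lemma stabilize (d : R) : (0 < d)%R -> forall U, exists W,
  stableR d W /\ (INR (sdist U W) * (2 * d) <= INR (Cr U))%R.
Proof.
move=> d0 U; move Hc: (Cr U) => c; elim/ltn_ind: c U Hc => c IH U Hc.
case: (classic (stableR d U)) => [Hs|Hns].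
  exists U; split=> //.
  have -> : sdist U U = 0 by rewrite /sdist setDv cards0.
  rewrite /= Rmult_0_l; apply: pos_INR.
have [w Hw] := not_all_ex_not _ _ Hns; have Hw' := Rnot_le_lt _ _ Hw.
have Hf := Cr_flip U w.
have HfR : (INR (Cr (flip U w)) + 4 * INR (cr U w) = INR (Cr U) + 2 * INR k)%R.
  have := f_equal INR Hf; rewrite ?INR_addn ?INR_muln ?plus_INR ?mult_INR /=; lra.
rewrite ?INR_muln ?mult_INR /= in Hw'.
have lt : Cr (flip U w) < c.
  apply/ltP; apply: INR_lt; rewrite -Hc; have := pos_INR k; lra.
have [W [HW1 HW2]] := IH _ lt _ erefl.
exists W; split=> //.
have Ht := sdist_tri U (flip U w) W; rewrite sdist_flip in Ht.
have HtR : (INR (sdist U W) <= 1 + INR (sdist (flip U w) W))%R.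
  by rewrite Rplus_comm -S_INR; apply: le_INR; apply/leP.
have : (INR (sdist U W) * (2 * d) <= (1 + INR (sdist (flip U w) W)) * (2 * d))%R.
  apply: Rmult_le_compat_r => //; lra.
rewrite -Hc; lra.
Qed.

Theorem cover (good : {set V} -> Prop) Bn J (d : R) (v00 : V) :
  (0 < d)%R -> (forall U, good U -> Cr U <= Bn) -> 4 * J * Bn < k * k ->
  2 * #|V| < J.+1 * k -> k < 2 * #|V| ->
  exists F : {set {set V}}, #|F| <= expn 2 J /\ (forall W, W \in F -> stableR d W) /\
   forall U, good U -> exists2 W, W \in F & exists a s, sdist U W <= a + s /\
      a * k <= (16 * J + 8) * Bn /\ (INR s * (2 * d) <= INR Bn)%R.
Proof.
move=> d0 HB HJ HJk HV.
have kp : 0 < k by case: k HJ => //; rewrite muln0.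
have sepJ : forall Q P, sep Q P -> #|P| <= J.
  move=> Q P /sep_bound H; rewrite -ltnS -(ltn_pmul2r kp); exact: leq_ltn_trans H HJk.
have [[Q [P [_ [_ [sP cP]]]]]|[Q [HQ [sQ sat]]]] := saturate v00 HB HJ HV (leqnn J).
  by have := sepJ _ _ sP; rewrite leqNgt cP.
pose key U := Round Q U :&: Pc Q.
pose PK K W := stableR d W /\ ((exists U, good U /\ key U = K) ->
   exists U, good U /\ key U = K /\ (INR (sdist U W) * (2 * d) <= INR (Cr U))%R).
pose chooseW K := epsilon (inhabits (set0 : {set V})) (PK K).
have spec : forall K, PK K (chooseW K).
  move=> K; apply: epsilon_spec.
  case: (classic (exists U, good U /\ key U = K)) => [[U [gU kU]]|none].
    have [W [sW dW]] := stabilize d0 U.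
    by exists W; split=> // _; exists U.
  exists set0; split=> // v; rewrite cr_set0 /=; have := pos_INR k; lra.
exists [set chooseW K | K in powerset (Pc Q)]; split.
  apply: leq_trans (leq_imset_card _ _) _; rewrite card_powerset.
  apply: leq_pexp2l => //; exact: sepJ (Pc_sep Q).
split.
  by move=> W /imsetP[K _ ->]; case: (spec K).
move=> U gU; exists (chooseW (key U)).
  by apply: imset_f; rewrite powersetE subsetIr.
have [_ H] := spec (key U).
have [U' [gU' [kU' HW]]] := H (ex_intro _ U (conj gU erefl)).
have RR : Round Q U = Round Q U' by apply: round_key.
exists (2 * (#|tinys Q| + #|tinys (U :: Q)|) + 2 * (#|tinys Q| + #|tinys (U' :: Q)|)),
       (sdist U' (chooseW (key U))).
split.
  have := sdist_tri U (Round Q U) (chooseW (key U)).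
  have := sdist_tri (Round Q U) U' (chooseW (key U)).
  have := round_close sat gU; have := round_close sat gU'.
  rewrite (sdist_sym (Round Q U) U') RR; lia.
split; last first.
  apply: Rle_trans HW _; apply: le_INR; apply/leP; exact: HB.
have HBQ : forall W, W \in Q -> Cr W <= Bn by move=> W /HQ; apply: HB.
have HBU : forall X, good X -> forall W, W \in X :: Q -> Cr W <= Bn.
  by move=> X gX W; rewrite inE => /orP[/eqP->|/HQ]; apply: HB.
have T0 := leq_trans (tiny_count Q) (leq_mul (leqnn 2) (sum_Cr_bound HBQ)).
have T1 := leq_trans (tiny_count (U :: Q)) (leq_mul (leqnn 2) (sum_Cr_bound (HBU _ gU))).
have T2 := leq_trans (tiny_count (U' :: Q)) (leq_mul (leqnn 2) (sum_Cr_bound (HBU _ gU'))).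
have sQB : size Q * Bn <= J * Bn by rewrite leq_mul2r sQ orbT.
rewrite /= in T1 T2.
move: T0 T1 T2 sQB; move: #|tinys Q| #|tinys (U :: Q)| #|tinys (U' :: Q)| (size Q) => a b c q *.
nia.
Qed.

End Core.


Section Graph.
Variable n : nat.
Variable adj : 'I_n -> 'I_n -> bool.

Local Notation VT := ('I_n + 'I_n)%type.

Definition ge (u v : VT) : bool :=
  match u, v with
  | inl x, inr y => adj x y
  | inr y, inl x => adj x y
  | _, _ => false
  end.

Lemma ge_sym x y : ge x y = ge y x.
Proof. by case: x; case: y. Qed.

Lemma ge_irr x : ge x x = false.
Proof. by case: x. Qed.

Lemma card_split (A : {set VT}) :
  #|A| = #|[set x | inl x \in A]| + #|[set y | inr y \in A]|.
Proof.
rewrite -sum1_card big_sumType /= -!sum1dep_card.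
by congr (_ + _); apply: eq_bigl => x; rewrite inE.
Qed.

Definition pr1 (W : {set VT}) := [set x | inl x \in W].
Definition pr2 (W : {set VT}) := [set y | inr y \in W].
Definition lift (S T : {set 'I_n}) : {set VT} :=
  [set v | match v with inl x => x \in S | inr y => y \in T end].

Lemma pr1_lift S T : pr1 (lift S T) = S.
Proof. by apply/setP => x; rewrite !inE. Qed.
Lemma pr2_lift S T : pr2 (lift S T) = T.
Proof. by apply/setP => x; rewrite !inE. Qed.

Lemma ge_reg k : bip_regular k adj -> forall v, #|[set u | ge v u]| = k.
Proof.
case=> H1 H2 [x|y]; rewrite card_split.
- have -> : [set x0 | inl x0 \in [set u | ge (inl x) u]] = set0.
    by apply/setP => z; rewrite !inE.
  rewrite cards0 -(H1 x); apply: eq_card => z; by rewrite !inE.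
- have -> : [set y0 | inr y0 \in [set u | ge (inr y) u]] = set0.
    by apply/setP => z; rewrite !inE.
  rewrite cards0 addn0 -(H2 y); apply: eq_card => z; by rewrite !inE.
Qed.

Lemma cr_inl W x : cr ge W (inl x) = degCr_X adj (pr1 W) (pr2 W) x.
Proof.
rewrite /cr card_split.
have -> : [set x0 | inl x0 \in [set u | ge (inl x) u && ((u \in W) != (inl x \in W))]] = set0.
  by apply/setP => z; rewrite !inE.
rewrite cards0 /degCr_X; apply: eq_card => z; rewrite !inE /is_cross !inE.
by rewrite eq_sym.
Qed.

Lemma cr_inr W y : cr ge W (inr y) = degCr_Y adj (pr1 W) (pr2 W) y.
Proof.
rewrite /cr card_split.
have -> : [set y0 | inr y0 \in [set u | ge (inr y) u && ((u \in W) != (inr y \in W))]] = set0.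
  by apply/setP => z; rewrite !inE.
rewrite cards0 addn0 /degCr_Y; apply: eq_card => z; rewrite !inE /is_cross !inE.
done.
Qed.

Lemma num_cross_X S T : num_cross adj S T = \sum_x degCr_X adj S T x.
Proof.
rewrite /num_cross -sum1dep_card big_mkcond /=.
rewrite -(pair_big xpredT xpredT (fun x y => if is_cross adj S T x y then 1 else 0)) /=.
apply: eq_bigr => x _; rewrite /degCr_X -sum1dep_card [in RHS]big_mkcond /=.
done.
Qed.

Lemma num_cross_Y S T : num_cross adj S T = \sum_y degCr_Y adj S T y.
Proof.
rewrite num_cross_X /degCr_X /degCr_Y.
under eq_bigr => x _ do rewrite -sum1dep_card big_mkcond /=.
rewrite exchange_big /=; apply: eq_bigr => y _.
by rewrite -sum1dep_card [in RHS]big_mkcond /=.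
Qed.

Lemma Cr_num W : Cr ge W = 2 * num_cross adj (pr1 W) (pr2 W).
Proof.
rewrite /Cr big_sumType /=.
under eq_bigr => x _ do rewrite cr_inl.
under [X in _ + X]eq_bigr => y _ do rewrite cr_inr.
by rewrite -num_cross_X -num_cross_Y; lia.
Qed.

Lemma sdist_cut W W' : sdist W W' = cut_dist (pr1 W) (pr2 W) (pr1 W') (pr2 W').
Proof.
rewrite /sdist /cut_dist !card_split.
have E : forall A B : {set VT}, [set x | inl x \in A :\: B] = pr1 A :\: pr1 B.
  by move=> A B; apply/setP => z; rewrite !inE.
have E' : forall A B : {set VT}, [set x | inr x \in A :\: B] = pr2 A :\: pr2 B.
  by move=> A B; apply/setP => z; rewrite !inE.
rewrite !E !E' addnACA !addnA; done.
Qed.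

End Graph.

Section Ar.
Local Open Scope R_scope.

Lemma budget_arith (nR kR L l JR BnR : R) :
  0 < nR -> 0 < kR -> kR <= nR -> 1000 <= L -> L * L * L = l -> 1000 * nR <= kR * L ->
  JR * kR <= 4 * nR -> 0 <= JR -> 0 <= BnR -> BnR <= 8 * nR * kR / l ->
  4 * JR * BnR < kR * kR.
Proof.
intros n0 k0 kn L1 Ll HK HJ J0 B0 HB.
assert (l0 : 0 < l) by nra.
assert (HB' : BnR * l <= 8 * nR * kR).
{ apply (Rmult_le_compat_r l) in HB; [|lra].
  replace (8 * nR * kR / l * l) with (8 * nR * kR) in HB by (field; lra). exact HB. }
assert (H1 : 4 * JR * BnR * l <= 32 * nR * (JR * kR)) by nra.
assert (H2 : 4 * JR * BnR * l <= 128 * nR * nR) by nra.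
assert (H3 : 1000000 * (nR * nR) <= (kR * L) * (kR * L)) by nra.
assert (H4 : 128 * nR * nR < kR * kR * l).
{ rewrite <- Ll. nra. }
assert (H5 : 4 * JR * BnR * l < kR * kR * l) by lra.
nra.
Qed.

Lemma final_arith (nR kR L l JR BnR aR sR : R) :
  0 < nR -> 0 < kR -> kR <= nR -> 1000 <= L -> L * L * L = l -> 1000 * nR <= kR * L ->
  JR * kR <= 4 * nR -> 0 <= JR -> 0 <= BnR -> BnR <= 8 * nR * kR / l ->
  aR * kR <= (16 * JR + 8) * BnR -> sR * (2 * (nR / L)) <= BnR -> 0 <= aR -> 0 <= sR ->
  aR + sR <= nR / L.
Proof.
intros n0 k0 kn L1 Ll HK HJ J0 B0 HB Ha Hs a0 s0.
assert (l0 : 0 < l) by nra.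
assert (HB' : BnR * l <= 8 * nR * kR).
{ apply (Rmult_le_compat_r l) in HB; [|lra].
  replace (8 * nR * kR / l * l) with (8 * nR * kR) in HB by (field; lra). exact HB. }
assert (HJ2 : (16 * JR + 8) * kR <= 72 * nR) by nra.
assert (A1 : aR * kR * l <= (16 * JR + 8) * (8 * nR * kR)) by nra.
assert (A2 : aR * l <= (16 * JR + 8) * (8 * nR)).
{ apply (Rmult_le_reg_r kR); [lra|]. nra. }
assert (A3 : aR * l * kR <= 576 * nR * nR) by nra.
assert (A4 : aR * l * kR * 1000 <= 576 * nR * (kR * L)) by nra.
assert (A5 : aR * l * 1000 <= 576 * nR * L).
{ apply (Rmult_le_reg_r kR); [lra|]. nra. }
assert (A6 : aR * L * L * 1000 <= 576 * nR).
{ apply (Rmult_le_reg_r L); [lra|]. rewrite <- Ll in A5. nra. }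
assert (S1 : sR * (2 * nR) <= BnR * L).
{ apply (Rmult_le_compat_r L) in Hs; [|lra].
  replace (sR * (2 * (nR / L)) * L) with (sR * (2 * nR)) in Hs by (field; lra). exact Hs. }
assert (S2 : sR * (2 * nR) * l <= 8 * nR * kR * L) by nra.
assert (S3 : sR * l <= 4 * kR * L).
{ apply (Rmult_le_reg_r (2 * nR)); [lra|]. nra. }
assert (S4 : sR * L * L <= 4 * nR).
{ apply (Rmult_le_reg_r L); [lra|]. rewrite <- Ll in S3. nra. }
assert (C : (aR + sR) * L * L <= 5 * nR) by nra.
assert (C2 : (aR + sR) * L <= nR).
{ apply (Rmult_le_reg_r L); [lra|]. nra. }
apply (Rmult_le_reg_r L); [lra|].
replace (nR / L * L) with nR by (field; lra). lra.
Qed.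

Lemma m_arith (nR kR JR : R) : 0 < kR -> kR <= nR -> JR * kR <= 4 * nR ->
  4 * nR < (JR + 1) * kR -> 3 * nR / kR <= JR /\ JR <= 4 * nR / kR.
Proof.
intros k0 kn H1 H2; split.
- apply (Rmult_le_reg_r kR); [lra|].
  replace (3 * nR / kR * kR) with (3 * nR) by (field; lra). nra.
- apply (Rmult_le_reg_r kR); [lra|].
  replace (4 * nR / kR * kR) with (4 * nR) by (field; lra). nra.
Qed.

End Ar.

Lemma expn_pow m j : expn m j = Nat.pow m j.
Proof. elim: j => [|j IH] //; by rewrite expnS IH /= -multE. Qed.

Lemma ln_nonpos x : (x <= 0)%R -> ln x = 0%R.
Proof. move=> H; rewrite /ln; case: Rlt_dec => [h|h]; [exfalso; lra|done]. Qed.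

Theorem lemma2p4 :
  exists c1 c2 : R, (0 < c1)%R /\ (0 < c2)%R /\
  exists (K : R) (N : nat),
  forall (n k : nat) (adj : 'I_n -> 'I_n -> bool),
    (N <= n)%N ->
    (K <= INR k * log13 n / INR n)%R ->
    bip_regular k adj ->
    let eps := (INR n / (INR k * log13 n))%R in
    exists (m : nat) (cuts : 'I_m -> {set 'I_n} * {set 'I_n}),
      (Rpower 2 (c1 * INR n / INR k) <= INR m <= Rpower 2 (c2 * INR n / INR k))%R /\
      (forall (i : 'I_m) (x : 'I_n),
          (INR (degCr_X adj (cuts i).1 (cuts i).2 x) <= (1 + eps) * INR k / 2)%R /\
          (INR (degCr_Y adj (cuts i).1 (cuts i).2 x) <= (1 + eps) * INR k / 2)%R) /\
      (forall S T : {set 'I_n},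
          internal_cut k adj S T -> (#|T| < #|S|)%N ->
          exists i : 'I_m,
            (INR (cut_dist S T (cuts i).1 (cuts i).2) <= eps * INR k)%R).
Proof.
exists 3%R, 4%R; split; first lra; split; first lra.
exists 1000%R, 1%N => n k adj Hn HK Hreg eps.
have n0 : (0 < n)%N by [].
pose x0 : 'I_n := Ordinal n0.
have kn : (k <= n)%N.
  have [H1 _] := Hreg; rewrite -(H1 x0).
  by apply: (leq_trans (max_card _)); rewrite card_ord.
have Lpos : (0 < log13 n)%R by rewrite /log13 /Rpower; apply: exp_pos.
have nR : (0 < INR n)%R by apply: lt_0_INR; apply/ltP.
have kR : (INR k <= INR n)%R by apply: le_INR; apply/leP.
have HK' : (1000 * INR n <= INR k * log13 n)%R.
  have E : (INR k * log13 n / INR n * INR n = INR k * log13 n)%R by field; lra.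
  have := Rmult_le_compat_r (INR n) _ _ (Rlt_le _ _ nR) HK; lra.
have kpos : (0 < INR k)%R.
  case: (Rle_lt_dec (INR k) 0) => // h.
  have : (INR k * log13 n <= 0)%R by nra.
  lra.
have k0 : (0 < k)%N by apply/ltP; apply: INR_lt; rewrite /=; lra.
have L1000 : (1000 <= log13 n)%R by nra.
pose l := ln (INR n).
have lpos : (0 < l)%R.
  case: (Rle_lt_dec l 0) => // h; exfalso.
  move: L1000; rewrite /log13 /Rpower -/l (ln_nonpos h) Rmult_0_r exp_0; lra.
have L3 : (log13 n * log13 n * log13 n = l)%R.
  have E1 : Rpower (log13 n) (INR 3) = (log13 n ^ 3)%R by apply: Rpower_pow.
  have E2 : Rpower (log13 n) (INR 3) = l.
    rewrite /log13 Rpower_mult -/l.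
    have -> : (1 / 3 * INR 3 = 1)%R by rewrite /=; field.
    by apply: Rpower_1.
  rewrite -E2 E1 /=; ring.
pose e := ge adj.
pose b2 := (8 * INR n * INR k / l)%R.
pose good (W : {set ('I_n + 'I_n)%type}) := (INR (Cr e W) <= b2)%R.
pose goodb (W : {set ('I_n + 'I_n)%type}) := if Rle_dec (INR (Cr e W)) b2 then true else false.
pose Bn := \max_(W : {set ('I_n + 'I_n)%type} | goodb W) Cr e W.
have HB : forall W, good W -> (Cr e W <= Bn)%N.
  move=> W gW; apply: leq_bigmax_cond; rewrite /goodb; by case: Rle_dec.
have b20 : (0 <= b2)%R.
  rewrite /b2; apply: Rmult_le_pos; last by apply: Rlt_le; apply: Rinv_0_lt_compat.
  nra.
have HBn : (INR Bn <= b2)%R.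
  rewrite /Bn; apply: (big_ind (fun x => INR x <= b2)%R) => //.
  - move=> x y Hx Hy; rewrite /maxn; by case: ifP.
  - by move=> W; rewrite /goodb; case: Rle_dec.
pose J := (4 * n) %/ k.
have HJ1 : (J * k <= 4 * n)%N by apply: leq_trunc_div.
have HJ2 : (4 * n < J.+1 * k)%N by apply: ltn_ceil.
have HJ1R : (INR J * INR k <= 4 * INR n)%R.
  have := le_INR _ _ (elimT leP HJ1); rewrite !INR_muln /=; lra.
have HJ2R : (4 * INR n < (INR J + 1) * INR k)%R.
  have := lt_INR _ _ (elimT ltP HJ2); rewrite !INR_muln -S_INR /=; lra.
pose d := (INR n / log13 n)%R.
have d0 : (0 < d)%R by rewrite /d; apply: Rdiv_lt_0_compat.
have cardV : #|{: 'I_n + 'I_n}| = (n + n)%N by rewrite card_sum card_ord.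
have Hbud : (4 * J * Bn < k * k)%N.
  apply/ltP; apply: INR_lt; rewrite !INR_muln /=.
  have := budget_arith nR kpos kR L1000 L3 HK' HJ1R (pos_INR J) (pos_INR Bn) HBn.
  lra.
have [F [HF1 [HF2 HF3]]] := @cover (('I_n + 'I_n)%type) e (@ge_sym n adj) (@ge_irr n adj) k
    (ge_reg Hreg) good Bn J d (inl x0) d0 HB Hbud
    ltac:(rewrite cardV; lia) ltac:(rewrite cardV; lia).
pose cutsW (i : nat) := nth set0 (enum F) i.
exists (expn 2 J), (fun i => (pr1 (cutsW i), pr2 (cutsW i))).
have epsk : (eps * INR k = d)%R by rewrite /eps /d; field; lra.
split.
  have [M1 M2] := m_arith kpos kR HJ1R HJ2R.
  have -> : INR (expn 2 J) = Rpower 2 (INR J).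
    rewrite expn_pow pow_INR Rpower_pow; last lra.
    by have -> : INR 2 = 2%R by rewrite /=; lra.
  split; apply: Rle_Rpower; lra.
split.
  move=> i x.
  have sW : stableR e k d (cutsW i).
    rewrite /cutsW; case: (ltnP i (size (enum F))) => h.
      by apply: HF2; rewrite -mem_enum; apply: mem_nth.
    rewrite nth_default // => v; rewrite cr_set0 /=; have := pos_INR k; lra.
  have := sW (inl x); have := sW (inr x).
  rewrite /= cr_inl cr_inr !INR_muln /=.
  have E : ((1 + eps) * INR k / 2 = (INR k + d) / 2)%R by rewrite -epsk; field.
  rewrite E; lra.
move=> S T HI _.
pose U := lift S T.
have gU : good U.
  rewrite /good Cr_num /U pr1_lift pr2_lift INR_muln /b2.
  move: HI; rewrite /internal_cut -/l /=; lra.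
have [W WF [a [s [Hd [Ha Hs]]]]] := HF3 U gU.
have WE : W \in enum F by rewrite mem_enum.
have iW : (index W (enum F) < expn 2 J)%N.
  apply: leq_trans HF1; by rewrite cardE index_mem.
exists (Ordinal iW).
rewrite /cutsW /= nth_index //.
have -> : cut_dist S T (pr1 W) (pr2 W) = sdist U W by rewrite sdist_cut /U pr1_lift pr2_lift.
apply: (Rle_trans _ (INR a + INR s)).
  by rewrite -INR_addn; apply: le_INR; apply/leP.
rewrite epsk.
apply: (final_arith nR kpos kR L1000 L3 HK' HJ1R (pos_INR J) (pos_INR Bn) HBn) => //.
- have I16 : INR 16 = 16%R by rewrite /=; lra.
  have I8 : INR 8 = 8%R by rewrite /=; lra.
  have := le_INR _ _ (elimT leP Ha); rewrite !INR_muln INR_addn INR_muln I16 I8; lra.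
- exact: pos_INR.
- exact: pos_INR.
Qed.
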